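(* Consider AdaFTRL with $1/2$-Tsallis entropy for $K$-armed bandits relying on a known upper bound $M$ on the payoffs (described in the context). For all $m\in\mathbb{R}$ with $m\le M$, all oblivious sequences $y_1,y_2,\dots$ in $[m,M]^K$ and all $T\ge1$, \[ R_T(y_{1:T})\le 4(M-m)\sqrt{KT}+2(M-m). \]
   Context: Oblivious adversarial $K$-armed bandits ($K\ge2$): reward vectors $y_t\in[m,M]^K$ fixed beforehand; at round $t$ the player draws $A_t\sim p_t$ and observes only $y_{t,A_t}$; $R_T(y_{1:T})=\max_a\sum_{t=1}^Ty_{t,a}-\mathbb{E}[\sum_{t=1}^Ty_{t,A_t}]$. The player knows $M$ but not $m$. Let $\mathcal{S}$ be the probability simplex over $[K]$, $H_{1/2}(p)=-\sum_{a=1}^K2\sqrt{p_a}$ (for $p\in[0,\infty)^K$), and for $q$ with all $q_a>0$, $B(p,q)=H_{1/2}(p)-H_{1/2}(q)-\langle\nabla H_{1/2}(q),p-q\rangle=\sum_a(\sqrt{p_a}-\sqrt{q_a})^2/\sqrt{q_a}$. Algorithm (input $M$): $\eta_1=+\infty$, $p_1=(1/K,\dots,1/K)$. For $t\ge1$: draw $A_t\sim p_t$; observe $y_{t,A_t}$; set $\widehat y_{t,a}=\frac{y_{t,a}-M}{p_{t,a}}\mathbf{1}\{A_t=a\}+M$; compute $\delta_t=\max_{p\in\mathcal{S}}\{\langle p_t-p,-\widehat y_t\rangle-B(p,p_t)/\eta_t\}$ (with the convention $B(p,p_t)/\eta_t=0$ when $\eta_t=+\infty$); set $\eta_{t+1}=2(\sqrt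 K-1)/\sum_{s=1}^t\delta_s$; set $p_{t+1}\in\arg\min_{p\in\mathcal{S}}\bigl\{-\sum_{a}p_a\sum_{s=1}^t\widehat y_{s,a}-\frac1{\eta_{t+1}}\sum_a2\sqrt{p_a}\bigr\}$. *)

(* Defs.v *)
From HB Require Import structures.
From mathcomp Require Import all_boot all_order all_algebra.
From mathcomp Require Import all_classical all_reals.
Set Implicit Arguments. Unset Strict Implicit. Unset Printing Implicit Defensive.
Import Order.TTheory GRing.Theory Num.Theory.
Local Open Scope classical_set_scope.
Local Open Scope ring_scope.

(* Conventions:
   - actions are 'I_K;
   - rounds are 0-based: y t is the reward vector y_{t+1} of the paper;
   - a history is a sequence of past actions stored MOST RECENT FIRST:
     h = [:: A_t; ...; A_1] (so size h = t);
   - a policy p maps a history h of size t to the distribution p_{t+1};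
   - instead of eta we track inv_eta = 1/eta (inv_eta = 0 <-> eta = +oo). *)

Section Bandit.
Variables (R : realType) (K : nat).

Definition in_simplex (q : 'I_K -> R) : Prop :=
  (forall a, 0 <= q a) /\ \sum_(a < K) q a = 1.

Definition tsallis (q : 'I_K -> R) : R := - \sum_(a < K) 2 * Num.sqrt (q a).

Definition bregman (q r : 'I_K -> R) : R :=
  \sum_(a < K) (Num.sqrt (q a) - Num.sqrt (r a)) ^+ 2 / Num.sqrt (r a).

Variables (M : R) (y : nat -> 'I_K -> R) (p : seq 'I_K -> 'I_K -> R).

(* importance-weighted estimate hat y_{t+1} at the round following history h
   (size h = t) when the action drawn is A *)
Definition yhat (h : seq 'I_K) (A : 'I_K) (a : 'I_K) : R :=
  (y (size h) a - M) / p h a * (A == a)%:R + M.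

Fixpoint Lhat (h : seq 'I_K) (a : 'I_K) : R :=
  match h with
  | [::] => 0
  | A :: h' => Lhat h' a + yhat h' A a
  end.

(* delta at the round following history h, with action A, given 1/eta = ie;
   B(q,p_t)/eta is multiplied by ie, hence is 0 when eta = +oo *)
Definition delta (ie : R) (h : seq 'I_K) (A : 'I_K) : R :=
  sup [set v | exists q, in_simplex q /\
     v = \sum_(a < K) (p h a - q a) * (- yhat h A a) - ie * bregman q (p h)].

Fixpoint inv_eta (h : seq 'I_K) : R :=
  match h with
  | [::] => 0
  | A :: h' => inv_eta h' +
      delta (inv_eta h') h' A / (2 * (Num.sqrt (K%:R) - 1))
  end.

Definition ftrl_obj (h : seq 'I_K) (q : 'I_K -> R) : R :=
  - \sum_(a < K) q a * Lhat h a - inv_eta h * \sum_(a < K) 2 * Num.sqrt (q a).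

(* p is a valid run of AdaFTRL (any argmin selection is allowed) *)
Definition adaftrl_policy : Prop :=
  (forall a, p [::] a = 1 / K%:R) /\
  (forall A h, in_simplex (p (A :: h)) /\
     forall q, in_simplex q -> ftrl_obj (A :: h) (p (A :: h)) <= ftrl_obj (A :: h) q).

(* expected reward collected during the next n rounds from history h,
   when A_t ~ p_t sequentially: V h 0 = 0,
   V h (n+1) = sum_a p_h(a) (y_{size h}(a) + V (a :: h) n) *)
Fixpoint exp_reward (h : seq 'I_K) (n : nat) : R :=
  match n with
  | 0 => 0
  | n'.+1 => \sum_(a < K) p h a * (y (size h) a + exp_reward (a :: h) n')
  end.

Definition regret (T : nat) : R :=
  sup (range (fun a : 'I_K => \sum_(t < T) y t a)) - exp_reward [::] T.

End Bandit.

(* Main.v *)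
Require Import Defs.
From HB Require Import structures.
From mathcomp Require Import all_boot all_order all_algebra.
From mathcomp Require Import all_classical all_reals.
From mathcomp Require Import ring lra.
Import Order.TTheory GRing.Theory Num.Theory.
Local Open Scope ring_scope.

Lemma sup_ge_mem (R : realType) (S : set R) X v :
  (forall w, S w -> w <= X) -> S v -> v <= sup S.
Proof.
move=> ub Sv; have hub : has_ubound S by exists X => w /ub.
exact: (ub_le_sup hub Sv).
Qed.

Lemma sup_le_bnd (R : realType) (S : set R) X v :
  (forall w, S w -> w <= X) -> S v -> sup S <= X.
Proof. move=> ub Sv; apply: ge_sup; first by exists v. by move=> w /ub. Qed.

Section Proof.
Variables (R : realType) (K : nat) (M m : R) (y : nat -> 'I_K -> R)
  (p : seq 'I_K -> 'I_K -> R).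
Hypothesis hK : (2 <= K)%N.
Hypothesis hmM : m <= M.
Hypothesis hy : forall t a, m <= y t a <= M.
Hypothesis hp : adaftrl_policy M y p.

Local Notation sK := (Num.sqrt (K%:R : R)).
Local Notation c0 := (2 * (Num.sqrt (K%:R : R) - 1)).

Lemma K_gt0 : (0:R) < K%:R.
Proof. by rewrite ltr0n; case: K hK. Qed.

Lemma sK_gt1 : 1 < sK.
Proof. rewrite -[X in X < _]sqrtr1 ltr_sqrt ?K_gt0 // ltr1n; by case: K hK => [|[|]]. Qed.

Lemma c0_gt0 : 0 < c0.
Proof. have := sK_gt1; lra. Qed.

Lemma sK2 : sK ^+ 2 = K%:R.
Proof. by rewrite sqr_sqrtr // ltW // K_gt0. Qed.

Lemma psimp h : in_simplex (p h).
Proof.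
case: h => [|A h]; last by case: (proj2 hp A h).
split=> [a|]; first by rewrite (proj1 hp) divr_ge0 // ltW // K_gt0.
under eq_bigr do rewrite (proj1 hp).
rewrite sumr_const card_ord.
have k0 := K_gt0; set k := (K%:R : R) in k0 *.
rewrite -mulr_natr -/k; field; lra.
Qed.

Lemma pmin h q : in_simplex q -> ftrl_obj M y p h (p h) <= ftrl_obj M y p h q.
Proof.
case: h => [|A h]; last by case: (proj2 hp A h) => _; apply.
by move=> _; rewrite /ftrl_obj /= big1 ?mul0r ?big1 // => a _; rewrite mulr0.
Qed.

Lemma sqrt_amgm (x : R) : 0 <= x -> 2 * Num.sqrt x <= x * sK + sK^-1.
Proof.
move=> x0; have s1 := sK_gt1.
have e : Num.sqrt x ^+ 2 = x by rewrite sqr_sqrtr.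
have sx := sqrtr_ge0 x.
rewrite -subr_ge0.
have -> : x * sK + sK^-1 - 2 * Num.sqrt x = (sK * Num.sqrt x - 1) ^+ 2 / sK.
  move: e sx; set r := Num.sqrt x => e sx; rewrite -e; field; apply/eqP => h; lra.
by rewrite divr_ge0 ?sqr_ge0 // ltW // (lt_trans ltr01 s1).
Qed.

Lemma sum_sqrt_le q : in_simplex q -> \sum_(a < K) Num.sqrt (q a) <= sK.
Proof.
case=> q0 q1; have s1 := sK_gt1.
suff : 2 * \sum_(a < K) Num.sqrt (q a) <= 2 * sK by lra.
rewrite mulr_sumr.
apply: le_trans; first by apply: ler_sum => a _; exact: sqrt_amgm (q0 a).
rewrite big_split /= -mulr_suml q1 sumr_const card_ord.
move: sK2 s1; set s := Num.sqrt _; set k := (K%:R : R) => e2 s1.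
rewrite -[s^-1 *+ K]mulr_natr -/k.
have -> : s^-1 * k = s by rewrite -e2; field; apply/eqP => h; lra.
lra.
Qed.


Lemma sum_ind (F : 'I_K -> R) A : \sum_(a < K) (A == a)%:R * F a = F A.
Proof.
rewrite (bigD1 A) //= eqxx mul1r big1 ?addr0 // => a /negPf.
by rewrite eq_sym => ->; rewrite mul0r.
Qed.

Local Notation cc h A := ((M - y (size h) A) / p h A).

Lemma cc_ge0 h A : 0 <= cc h A.
Proof.
have := hy (size h) A; have := (proj1 (psimp h)) A => pa /andP [_ yM].
by rewrite divr_ge0 // subr_ge0.
Qed.

Lemma pcc h A : p h A * cc h A <= M - m.
Proof.
have := hy (size h) A => /andP [my yM].
have [->|pn0] := eqVneq (p h A) 0; first by rewrite mul0r subr_ge0.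
rewrite mulrC mulfVK //; lra.
Qed.

Lemma lin h A q : in_simplex q ->
  \sum_(a < K) (p h a - q a) * (- yhat M y p h A a) = (p h A - q A) * cc h A.
Proof.
case=> _ q1; have [_ p1] := psimp h.
rewrite /yhat.
have e : forall a, (p h a - q a) * - ((y (size h) a - M) / p h a * (A == a)%:R + M)
  = (A == a)%:R * ((p h a - q a) * ((M - y (size h) a) / p h a)) + (- M) * (p h a - q a).
  by move=> a; ring.
under eq_bigr => a _ do rewrite e.
by rewrite big_split /= sum_ind -mulr_sumr sumrB p1 q1 subrr mulr0 addr0.
Qed.

Lemma pyhat h A : \sum_(a < K) p h a * yhat M y p h A a =
  M + p h A * ((y (size h) A - M) / p h A).
Proof.
have [_ p1] := psimp h.
rewrite /yhat.
have e : forall a, p h a * ((y (size h) a - M) / p h a * (A == a)%:R + M)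
  = (A == a)%:R * (p h a * ((y (size h) a - M) / p h a)) + p h a * M.
  by move=> a; ring.
under eq_bigr => a _ do rewrite e.
by rewrite big_split /= sum_ind -mulr_suml p1 mul1r addrC.
Qed.

Lemma bregman_ge0 (q r : 'I_K -> R) : 0 <= bregman q r.
Proof. by apply: sumr_ge0 => a _; rewrite divr_ge0 ?sqr_ge0 ?sqrtr_ge0. Qed.

Lemma bregman_self (r : 'I_K -> R) : bregman r r = 0.
Proof. by rewrite /bregman big1 // => a _; rewrite subrr expr0n /= mul0r. Qed.

Lemma bregman_term (q r : 'I_K -> R) a : (Num.sqrt (q a) - Num.sqrt (r a)) ^+ 2 / Num.sqrt (r a)
  <= bregman q r.
Proof.
rewrite /bregman (bigD1 a) //= lerDl.
by apply: sumr_ge0 => b _; rewrite divr_ge0 ?sqr_ge0 ?sqrtr_ge0.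
Qed.

Local Notation vq ie h A q := (\sum_(a < K) (p h a - q a) * (- yhat M y p h A a)
   - ie * bregman q (p h)).

Lemma vq_le ie h A q : 0 <= ie -> in_simplex q -> vq ie h A q <= M - m.
Proof.
move=> ie0 qs; rewrite lin //.
have := pcc h A; have := cc_ge0 h A; have := (proj1 qs) A.
have := bregman_ge0 q (p h); nra.
Qed.

Lemma delta_ub ie h A X : (forall q, in_simplex q -> vq ie h A q <= X) ->
  delta M y p ie h A <= X.
Proof.
move=> H; apply: (@sup_le_bnd R _ X (vq ie h A (p h))).
  by move=> w [q [qs ->]]; exact: H.
by exists (p h); split => //; exact: psimp.
Qed.

Lemma delta_lb ie h A q : 0 <= ie -> in_simplex q -> vq ie h A q <= delta M y p ie h A.
Proof.
move=> ie0 qs; apply: (@sup_ge_mem R _ (M - m)).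
  by move=> w [q' [qs' ->]]; exact: vq_le.
by exists q.
Qed.

Lemma delta_ge0 ie h A : 0 <= ie -> 0 <= delta M y p ie h A.
Proof.
move=> ie0; apply: le_trans (delta_lb ie h A (p h) ie0 (psimp h)).
by rewrite (lin h A (p h) (psimp h)) subrr mul0r bregman_self mulr0 subr0.
Qed.

Lemma delta_le ie h A : 0 <= ie -> delta M y p ie h A <= M - m.
Proof. by move=> ie0; apply: delta_ub => q qs; exact: vq_le. Qed.

Lemma ie_ge0 h : 0 <= inv_eta M y p h.
Proof.
elim: h => [|A h IH] //=; apply: addr_ge0 => //.
by rewrite divr_ge0 ?delta_ge0 // ltW // c0_gt0.
Qed.

Lemma key_stab (ie s r c B : R) : 0 <= ie -> 0 < s -> 0 <= r -> 0 <= c ->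
  (r - s) ^+ 2 / s <= B -> ie * ((s ^+ 2 - r ^+ 2) * c - ie * B) <= (c * s ^+ 2) ^+ 2 / s.
Proof.
move=> ie0 s0 r0 c0' hB.
have hB' : (r - s) ^+ 2 <= B * s by rewrite -ler_pdivrMr.
have e1 : ie * ((s ^+ 2 - r ^+ 2) * c - ie * B) * s <= (c * s ^+ 2) ^+ 2.
  have : ie * ie * (r - s) ^+ 2 <= ie * ie * (B * s) by rewrite ler_wpM2l ?mulr_ge0.
  set x := ie * (s - r).
  have [xle|xgt] := lerP x 0.
    have : x * ((s + r) * c * s) <= 0.
      apply: mulr_le0_ge0 => //; apply: mulr_ge0; [apply: mulr_ge0 => //|]; nra.
    rewrite /x => h1 h2.
    have -> : ie * ((s ^+ 2 - r ^+ 2) * c - ie * B) * s =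
      ie * (s - r) * ((s + r) * c * s) - ie * ie * (B * s) by ring.
    have : 0 <= ie * ie * (r - s) ^+ 2 by rewrite mulr_ge0 ?sqr_ge0 ?mulr_ge0.
    have : 0 <= (c * s ^+ 2) ^+ 2 by rewrite sqr_ge0.
    lra.
  have hr : r < s by move: xgt; rewrite /x; nra.
  rewrite /x => h2.
  have -> : ie * ((s ^+ 2 - r ^+ 2) * c - ie * B) * s =
      x * (s + r) * c * s - ie * ie * (B * s) by rewrite /x; ring.
  have h3 : x * (s + r) * c * s <= x * (2 * s) * c * s.
    have : 0 <= x * (s - r) * c * s.
      apply: mulr_ge0; last exact: ltW. apply: mulr_ge0 => //. apply: mulr_ge0; [exact: ltW|lra].
    have -> : x * (2 * s) * c * s = x * (s + r) * c * s + x * (s - r) * c * s by ring.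
    lra.
  have e3 : ie * ie * (r - s) ^+ 2 = x ^+ 2 by rewrite /x; ring.
  have : 0 <= (x - c * s ^+ 2) ^+ 2 by rewrite sqr_ge0.
  have e4 : x * (2 * s) * c * s = 2 * x * (c * s ^+ 2) by ring.
  nra.
by rewrite ler_pdivlMr.
Qed.


Lemma stab h A : inv_eta M y p h * delta M y p (inv_eta M y p h) h A <=
  (M - y (size h) A) ^+ 2 / Num.sqrt (p h A).
Proof.
set ie := inv_eta M y p h; have ie0 : 0 <= ie := ie_ge0 h.
have b0 : 0 <= (M - y (size h) A) ^+ 2 / Num.sqrt (p h A).
  by rewrite divr_ge0 ?sqr_ge0 ?sqrtr_ge0.
have [ie00|iegt] := eqVneq ie 0; first by rewrite ie00 mul0r.
have iep : 0 < ie by rewrite lt0r iegt.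
rewrite mulrC -ler_pdivlMr //.
apply: delta_ub => q qs; rewrite ler_pdivlMr // mulrC lin //.
have [P0|Pn0] := eqVneq (p h A) 0.
  rewrite P0 invr0 !mulr0 sub0r.
  rewrite sqrtr0 invr0 mulr0; have := bregman_ge0 q (p h); nra.
have Pp : 0 < p h A by rewrite lt0r Pn0 (proj1 (psimp h)).
have sP := sqrtr_gt0 (p h A); rewrite Pp in sP.
have eP : Num.sqrt (p h A) ^+ 2 = p h A by rewrite sqr_sqrtr // ltW.
have eQ : Num.sqrt (q A) ^+ 2 = q A by rewrite sqr_sqrtr // (proj1 qs).
have cge := cc_ge0 h A.
have eM : M - y (size h) A = cc h A * Num.sqrt (p h A) ^+ 2 by rewrite eP mulfVK.
move: cge eM; set c := cc h A => cge eM.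
rewrite [X in _ <= X ^+ 2 / _]eM -{1}eP -{1}eQ.
apply: key_stab => //; [exact: sqrtr_ge0 | exact: bregman_term].
Qed.

Lemma small_t (G C : R) : (forall t, 0 < t <= 1 -> - (t * C) <= G) -> 0 <= G.
Proof.
move=> H; rewrite leNgt; apply/negP => Gn.
have den : 0 < - G + `|C| + 1 by have := normr_ge0 C; lra.
set t := - G / (- G + `|C| + 1).
have t0 : 0 < t by rewrite divr_gt0 // oppr_gt0.
have t1 : t <= 1 by rewrite ler_pdivrMr // mul1r; have := normr_ge0 C; lra.
have := H t; rewrite t0 t1 => /(_ isT) h1.
have h2 : t * C <= t * `|C|.
  apply: ler_wpM2l; [exact: ltW | exact: real_ler_norm (num_real C)].
have h3 : t * `|C| < - G.
  rewrite /t mulrC mulrA ltr_pdivrMr // mulrC; have := normr_ge0 C; nra.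
lra.
Qed.

Lemma sqrt_lin (v u e : R) : 0 < v -> 0 <= u -> u ^+ 2 = v ^+ 2 + e ->
  e / (2 * v) - e ^+ 2 / (2 * v ^+ 3) <= u - v.
Proof.
move=> v0 u0 he.
have ee : e = u ^+ 2 - v ^+ 2 by rewrite he; ring.
rewrite -subr_ge0.
have -> : u - v - (e / (2 * v) - e ^+ 2 / (2 * v ^+ 3)) =
   (u * ((u - v) ^+ 2 * (u + 2 * v))) / (2 * v ^+ 3).
  rewrite ee; field; apply/eqP => h; lra.
apply: divr_ge0; last by rewrite mulr_ge0 // exprn_ge0 // ltW.
by rewrite mulr_ge0 // mulr_ge0 ?sqr_ge0 //; lra.
Qed.

Lemma sq_le (w u : R) : 0 <= w -> 0 <= u -> w ^+ 2 <= u ^+ 2 -> w <= u.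
Proof. move=> w0 u0 h; rewrite leNgt; apply/negP => h'; nra. Qed.

Section FOC.
Variables (L : 'I_K -> R) (ie : R) (P : 'I_K -> R).
Hypothesis iep : 0 < ie.
Hypothesis Ps : in_simplex P.
Local Notation Phi q := (- \sum_(a < K) q a * L a - ie * \sum_(a < K) 2 * Num.sqrt (q a)).
Hypothesis hmin : forall q, in_simplex q -> Phi P <= Phi q.

Lemma Phi_diff (q1 q2 : 'I_K -> R) : Phi q1 - Phi q2 =
  \sum_(a < K) (- ((q1 a - q2 a) * L a) - ie * (2 * (Num.sqrt (q1 a) - Num.sqrt (q2 a)))).
Proof.
have e : forall a, - ((q1 a - q2 a) * L a) - ie * (2 * (Num.sqrt (q1 a) - Num.sqrt (q2 a)))
  = ((- (q1 a * L a)) + q2 a * L a) + ((- (ie * (2 * Num.sqrt (q1 a)))) + ie * (2 * Num.sqrt (q2 a))).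
  by move=> a; ring.
rewrite (eq_bigr _ (fun a _ => e a)).
rewrite !big_split /= !sumrN -!mulr_sumr; ring.
Qed.

Lemma comb_simplex (q : 'I_K -> R) (t : R) : in_simplex q -> 0 <= t <= 1 ->
  in_simplex (fun a => P a + t * (q a - P a)).
Proof.
case=> q0 q1 /andP [t0 t1]; case: Ps => P0 P1; split.
  move=> a; have := q0 a; have := P0 a; nra.
by rewrite big_split /= -mulr_sumr sumrB q1 P1 subrr mulr0 addr0.
Qed.

Lemma interior b : 0 < P b.
Proof.
rewrite lt0r (proj1 Ps) andbT; apply/negP => /eqP Pb0.
pose eb := fun a : 'I_K => ((b == a)%:R : R).
have ebs : in_simplex eb.
  split => [a|]; first by rewrite /eb ler0n.
  have := sum_ind (fun _ => 1) b; under eq_bigr do rewrite mulr1; by [].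
set X := \sum_(a < K) (eb a - P a) * L a.
have key : forall s, 0 < s <= 1 -> - (s * (2 * ie * sK - X)) <= - (2 * ie).
  move=> s /andP [s0 s1].
  set t := s ^+ 2.
  have t0 : 0 <= t by rewrite /t sqr_ge0.
  have t1 : t <= 1 by rewrite /t expr2; nra.
  have t01 : 0 <= t <= 1 by rewrite t0 t1.
  have zs := comb_simplex eb t ebs t01.
  have := hmin _ zs; rewrite -subr_ge0 Phi_diff => h0.
  have hb : forall a, - ((P a + t * (eb a - P a) - P a) * L a)
      - ie * (2 * (Num.sqrt (P a + t * (eb a - P a)) - Num.sqrt (P a)))
      <= - (t * ((eb a - P a) * L a)) + (- (2 * ie * s)) * eb a
         + (2 * ie * t) * Num.sqrt (P a).
    move=> a; rewrite /eb; have [ba|nba] := eqVneq b a.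
      rewrite -ba Pb0 /= sqrtr0 !subr0 !add0r mulr1 /t sqrtr_sqr (ger0_norm (ltW s0)).
      rewrite mulr0 addr0 mulr1 mul1r; lra.
    rewrite /= !sub0r !mulr0 !addr0.
    have P0 := (proj1 Ps) a.
    have hz : (1 - t) * Num.sqrt (P a) <= Num.sqrt (P a + t * - P a).
      apply: sq_le; first by rewrite mulr_ge0 ?sqrtr_ge0 // subr_ge0.
        exact: sqrtr_ge0.
      rewrite exprMn sqr_sqrtr // sqr_sqrtr; last nra.
      have : 0 <= (1 - t) * t * P a by rewrite mulr_ge0 // mulr_ge0 // subr_ge0.
      nra.
    have : 0 <= ie * (Num.sqrt (P a + t * - P a) - (1 - t) * Num.sqrt (P a)).
      by rewrite mulr_ge0 ?subr_ge0 // ltW.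
    lra.
  have h1 := le_trans h0 (ler_sum _ (fun a _ => hb a)).
  move: h1; rewrite !big_split /= -!mulr_sumr.
  have -> : \sum_(i < K) eb i = 1 by case: ebs.
  rewrite sumrN -mulr_sumr -/X => h1.
  have hs := sum_sqrt_le P Ps.
  have h2 : 0 <= - (t * X) + - (2 * ie * s) * 1 + 2 * ie * t * sK.
    apply: le_trans h1 _; rewrite lerD2l; apply: ler_wpM2l => //.
    by rewrite !mulr_ge0 // ltW.
  have h3 : s * (2 * ie - s * (2 * ie * sK - X)) <= 0.
    move: h2; rewrite /t expr2; lra.
  rewrite pmulr_rle0 // in h3; lra.
move: (small_t _ _ key); rewrite oppr_ge0 => h.
have h2 : 0 < 2 * ie by rewrite mulr_gt0.
by have := lt_le_trans h2 h; rewrite ltxx.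
Qed.

Lemma foc q : in_simplex q -> ie * bregman q P <= Phi q - Phi P.
Proof.
move=> qs; have Pp := interior.
have vp : forall a, 0 < Num.sqrt (P a) by move=> a; rewrite sqrtr_gt0.
set G := \sum_(a < K) (- ((q a - P a) * L a) - ie * ((q a - P a) / Num.sqrt (P a))).
have eG : Phi q - Phi P - ie * bregman q P = G.
  rewrite Phi_diff /bregman mulr_sumr -sumrB; apply: eq_bigr => a _.
  have v0 := vp a.
  have eP : Num.sqrt (P a) ^+ 2 = P a by rewrite sqr_sqrtr // ltW.
  have eQ : Num.sqrt (q a) ^+ 2 = q a by rewrite sqr_sqrtr // (proj1 qs).
  move: v0 eP eQ; set v := Num.sqrt (P a); set w := Num.sqrt (q a) => v0 eP eQ.
  rewrite -eP -eQ; field; apply/eqP => h; lra.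
suff : 0 <= G by rewrite -eG subr_ge0.
set C := ie * \sum_(a < K) (q a - P a) ^+ 2 / Num.sqrt (P a) ^+ 3.
apply: (small_t G C) => t /andP [t0 t1].
have t01 : 0 <= t <= 1 by rewrite ltW.
have zs := comb_simplex q t qs t01.
have := hmin _ zs; rewrite -subr_ge0 Phi_diff => h0.
have hb : forall a, - ((P a + t * (q a - P a) - P a) * L a)
      - ie * (2 * (Num.sqrt (P a + t * (q a - P a)) - Num.sqrt (P a)))
      <= t * (- ((q a - P a) * L a) - ie * ((q a - P a) / Num.sqrt (P a)))
         + t ^+ 2 * (ie * ((q a - P a) ^+ 2 / Num.sqrt (P a) ^+ 3)).
  move=> a; have v0 := vp a.
  have eP : Num.sqrt (P a) ^+ 2 = P a by rewrite sqr_sqrtr // ltW.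
  have hz : 0 <= P a + t * (q a - P a) by have := proj1 zs a.
  have eZ : Num.sqrt (P a + t * (q a - P a)) ^+ 2 = Num.sqrt (P a) ^+ 2 + t * (q a - P a).
    by rewrite sqr_sqrtr // eP.
  have hl := sqrt_lin _ _ _ v0 (sqrtr_ge0 _) eZ.
  move: hl v0; set v := Num.sqrt (P a); set u := Num.sqrt _; set d := q a - P a => hl v0.
  rewrite -subr_ge0.
  have -> : t * (- (d * L a) - ie * (d / v)) + t ^+ 2 * (ie * (d ^+ 2 / v ^+ 3))
    - (- ((P a + t * d - P a) * L a) - ie * (2 * (u - v)))
    = 2 * ie * ((u - v) - (t * d / (2 * v) - (t * d) ^+ 2 / (2 * v ^+ 3))).
    field; apply/eqP => h; lra.
  by rewrite mulr_ge0 ?subr_ge0 // mulr_ge0 // ltW.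
have h1 := le_trans h0 (ler_sum _ (fun a _ => hb a)).
move: h1; rewrite big_split /= -!mulr_sumr -/G -/C => h1.
have h2 : 0 <= t * (G + t * C).
  by rewrite mulrDr mulrA -expr2.
rewrite pmulr_rge0 // in h2; lra.
Qed.

End FOC.


Lemma foc_h h q : in_simplex q ->
  inv_eta M y p h * bregman q (p h) <= ftrl_obj M y p h q - ftrl_obj M y p h (p h).
Proof.
move=> qs; have [ie0|ien0] := eqVneq (inv_eta M y p h) 0.
  by rewrite ie0 mul0r subr_ge0 pmin.
have iep : 0 < inv_eta M y p h by rewrite lt0r ien0 ie_ge0.
exact: (foc (Lhat M y p h) (inv_eta M y p h) (p h) iep (psimp h) (fun q' qs' => pmin h q' qs') q qs).
Qed.

Fixpoint Spy (g : seq 'I_K) : R :=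
  match g with
  | [::] => 0
  | A :: h => Spy h + \sum_(a < K) p h a * yhat M y p h A a
  end.

Lemma invariant g : - Spy g <= ftrl_obj M y p g (p g) + (2 * sK + c0) * inv_eta M y p g.
Proof.
elim: g => [|A h IH].
  by rewrite /ftrl_obj /= oppr0 mulr0 addr0 big1 ?mul0r ?subr0 ?oppr0 // => a _; rewrite mulr0.
set g := A :: h.
set ie := inv_eta M y p h.
have ie0 : 0 <= ie := ie_ge0 h.
set dl := delta M y p ie h A.
have dl0 : 0 <= dl := delta_ge0 ie h A ie0.
have c0p := c0_gt0.
have ieg : inv_eta M y p g = ie + dl / c0 by [].
set d' := dl / c0.
have edl : dl = c0 * d' by rewrite /d' mulrC divfK // gt_eqF.
have d'0 : 0 <= d' by rewrite divr_ge0 // ltW.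
have hf := foc_h h (p g) (psimp g).
have hd := delta_lb ie h A (p g) ie0 (psimp g).
have hs := sum_sqrt_le (p g) (psimp g).
rewrite (lin h A (p g) (psimp g)) in hd.
have elin : (p h A - p g A) * cc h A =
   - \sum_(a < K) p h a * yhat M y p h A a + \sum_(a < K) p g a * yhat M y p h A a.
  rewrite -(lin h A (p g) (psimp g)) -sumrN -big_split /=; apply: eq_bigr => a _; ring.
rewrite elin in hd.
have ePhi : ftrl_obj M y p g (p g) = ftrl_obj M y p h (p g)
    - \sum_(a < K) p g a * yhat M y p h A a
    - d' * \sum_(a < K) 2 * Num.sqrt (p g a).
  rewrite /ftrl_obj ieg -/d' /=.
  under eq_bigr => a _ do rewrite mulrDr.
  rewrite big_split /= -/ie; ring.
have hR : d' * \sum_(a < K) 2 * Num.sqrt (p g a) <= d' * (2 * sK).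
  by rewrite ler_wpM2l // -mulr_sumr ler_wpM2l.
rewrite ePhi ieg -/d'.
have -> : Spy g = Spy h + \sum_(a < K) p h a * yhat M y p h A a by [].
move: IH hf hd hR; rewrite -/dl -/ie edl.
set Sh := Spy h; set T1 := \sum_(a < K) p h a * _; set T2 := \sum_(a < K) p g a * _.
set B := bregman _ _; set Ph := ftrl_obj _ _ _ h (p h); set Pg := ftrl_obj _ _ _ h (p g).
set R2 := \sum_(a < K) _; move=> IH hf hd hR.
lra.
Qed.


Lemma pseudo g u : Lhat M y p g u - Spy g <= 2 * (c0 * inv_eta M y p g).
Proof.
pose eu := fun a : 'I_K => ((u == a)%:R : R).
have eus : in_simplex eu.
  split => [a|]; first by rewrite /eu ler0n.
  have := sum_ind (fun _ => 1) u; under eq_bigr do rewrite mulr1; by [].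
have h1 := pmin g eu eus.
have h2 := invariant g.
have e1 : ftrl_obj M y p g eu = - Lhat M y p g u - inv_eta M y p g * 2.
  rewrite /ftrl_obj /eu sum_ind.
  have -> : \sum_(a < K) 2 * Num.sqrt ((u == a)%:R : R) = \sum_(a < K) (u == a)%:R * 2.
    apply: eq_bigr => a _; case: (u == a) => /=; first by rewrite sqrtr1 mulr1 mul1r.
    by rewrite sqrtr0 mulr0 mul0r.
  by rewrite sum_ind.
rewrite e1 in h1.
have := ie_ge0 g; lra.
Qed.

Fixpoint Bs (g : seq 'I_K) : R :=
  match g with
  | [::] => 0
  | A :: h => Bs h + (M - y (size h) A) ^+ 2 / Num.sqrt (p h A)
  end.

Lemma Bs_ge0 g : 0 <= Bs g.
Proof.
elim: g => [|A h IH] //=; apply: addr_ge0 => //.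
by rewrite divr_ge0 ?sqr_ge0 ?sqrtr_ge0.
Qed.

Lemma selfb g : (c0 * inv_eta M y p g) ^+ 2 <= 2 * c0 * Bs g + (M - m) * (c0 * inv_eta M y p g).
Proof.
elim: g => [|A h IH]; first by rewrite /= mulr0 expr0n /= mulr0 add0r mulr0.
set ie := inv_eta M y p h.
have ie0 : 0 <= ie := ie_ge0 h.
set dl := delta M y p ie h A.
have dl0 : 0 <= dl := delta_ge0 ie h A ie0.
have dlD : dl <= M - m := delta_le ie h A ie0.
have hst := stab h A; rewrite -/ie -/dl in hst.
have c0p := c0_gt0.
have -> : c0 * inv_eta M y p (A :: h) = c0 * ie + dl.
  rewrite /= -/ie -/dl mulrDr; congr (_ + _); rewrite mulrC divfK // gt_eqF //.
rewrite /=.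
move: IH hst; rewrite -/ie.
set b := (M - y (size h) A) ^+ 2 / _; set S := c0 * ie; set Bh := Bs h.
move=> IH hst.
have h1 : dl ^+ 2 <= (M - m) * dl by rewrite expr2 ler_wpM2r.
have h2 : S * dl <= c0 * b by rewrite /S -mulrA ler_wpM2l // ltW.
have -> : (S + dl) ^+ 2 = S ^+ 2 + 2 * (S * dl) + dl ^+ 2 by ring.
lra.
Qed.

Lemma quad (x a D : R) : 0 <= x -> 0 <= a -> 0 <= D -> x ^+ 2 <= a + D * x ->
  x <= D + Num.sqrt a.
Proof.
move=> x0 a0 D0 h; rewrite leNgt; apply/negP => hx.
have sa := sqrtr_ge0 a; have ea : Num.sqrt a ^+ 2 = a by rewrite sqr_sqrtr.
have h1 : Num.sqrt a < x by lra.
have h2 : x * (D + Num.sqrt a) < x * x by rewrite ltr_pM2l //; lra.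
have h3 : Num.sqrt a * Num.sqrt a < x * Num.sqrt a + x * x - x * Num.sqrt a.
  nra.
nra.
Qed.

Lemma pseudo2 g u : Lhat M y p g u - Spy g <= 2 * (M - m) + 2 * Num.sqrt (2 * c0 * Bs g).
Proof.
have h := pseudo g u.
have c0p := c0_gt0.
have hD : 0 <= M - m by rewrite subr_ge0.
have hq := quad _ _ _ (mulr_ge0 (ltW c0p) (ie_ge0 g))
   (mulr_ge0 (mulr_ge0 (ler0n R 2) (ltW c0p)) (Bs_ge0 g)) hD (selfb g).
lra.
Qed.


Fixpoint Ex (h : seq 'I_K) (n : nat) (f : seq 'I_K -> R) : R :=
  match n with
  | 0 => f h
  | n'.+1 => \sum_(a < K) p h a * Ex (a :: h) n' f
  end.

Lemma psum h : \sum_(a < K) p h a = 1.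
Proof. by case: (psimp h). Qed.

Lemma Ex_mono n h f f' : (forall g, f g <= f' g) -> Ex h n f <= Ex h n f'.
Proof.
move=> H; elim: n h => [|n IH] h /=; first exact: H.
apply: ler_sum => a _; apply: ler_wpM2l; [exact: (proj1 (psimp h)) | exact: IH].
Qed.

Lemma Ex_ext n h f f' : (forall g, f g = f' g) -> Ex h n f = Ex h n f'.
Proof. by move=> H; apply/le_anti; rewrite !Ex_mono // => g; rewrite H. Qed.

Lemma Ex_const n h c : Ex h n (fun _ => c) = c.
Proof.
elim: n h => [|n IH] h //=.
under eq_bigr do rewrite IH.
by rewrite -mulr_suml psum mul1r.
Qed.

Lemma Ex_lin n h f f' (al be ga : R) :
  Ex h n (fun g => al * f g + be * f' g + ga) = al * Ex h n f + be * Ex h n f' + ga.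
Proof.
elim: n h => [|n IH] h //=.
under eq_bigr do rewrite IH.
have e : forall a, p h a * (al * Ex (a :: h) n f + be * Ex (a :: h) n f' + ga) =
   al * (p h a * Ex (a :: h) n f) + be * (p h a * Ex (a :: h) n f') + ga * p h a.
  by move=> a; ring.
by rewrite (eq_bigr _ (fun a _ => e a)) !big_split /= -!mulr_sumr psum mulr1.
Qed.

Lemma Ex_ge0 n h f : (forall g, 0 <= f g) -> 0 <= Ex h n f.
Proof. by move=> H; rewrite -(Ex_const n h 0); apply: Ex_mono. Qed.

Lemma wjensen (w x : 'I_K -> R) : in_simplex w -> (forall a, 0 <= x a) ->
  \sum_(a < K) w a * Num.sqrt (x a) <= Num.sqrt (\sum_(a < K) w a * x a).
Proof.
case=> w0 w1 x0.
set V := \sum_(a < K) w a * x a.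
have V0 : 0 <= V by apply: sumr_ge0 => a _; rewrite mulr_ge0.
have amgm : forall lam, 0 < lam ->
    \sum_(a < K) w a * Num.sqrt (x a) <= (V / lam + lam) / 2.
  move=> lam l0.
  have hh : forall a, w a * Num.sqrt (x a) <= (w a * x a / lam + w a * lam) / 2.
    move=> a; have ex : Num.sqrt (x a) ^+ 2 = x a by rewrite sqr_sqrtr.
    have sx := sqrtr_ge0 (x a).
    have : 2 * lam * Num.sqrt (x a) <= x a + lam ^+ 2.
      have := sqr_ge0 (Num.sqrt (x a) - lam); nra.
    move=> h2.
    have -> : (w a * x a / lam + w a * lam) / 2 = w a * ((x a + lam ^+ 2) / (2 * lam)).
      by field; apply/eqP => h; lra.
    apply: ler_wpM2l => //; rewrite ler_pdivlMr; last by rewrite mulr_gt0.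
    nra.
  apply: le_trans (ler_sum _ (fun a _ => hh a)) _.
  rewrite -mulr_suml big_split /= -mulr_suml -mulr_suml w1 mul1r.
  by rewrite mulr_suml.
have [V00|Vn0] := eqVneq V 0.
  rewrite V00 sqrtr0.
  suff : 0 <= - \sum_(a < K) w a * Num.sqrt (x a) by lra.
  apply: (small_t _ (1 / 2)) => t /andP [t0 t1].
  have := amgm t t0; rewrite V00 mul0r add0r; lra.
have Vp : 0 < V by rewrite lt0r Vn0.
have sV : 0 < Num.sqrt V by rewrite sqrtr_gt0.
apply: le_trans (amgm _ sV) _.
have eV : Num.sqrt V ^+ 2 = V by rewrite sqr_sqrtr.
rewrite -{1}eV.
have -> : (Num.sqrt V ^+ 2 / Num.sqrt V + Num.sqrt V) / 2 = Num.sqrt V.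
  by field; apply/eqP => h; lra.
by [].
Qed.

Lemma Ex_sqrt n h f : (forall g, 0 <= f g) ->
  Ex h n (fun g => Num.sqrt (f g)) <= Num.sqrt (Ex h n f).
Proof.
move=> H; elim: n h => [|n IH] h //=.
apply: le_trans (wjensen (p h) (fun a => Ex (a :: h) n f) (psimp h) _); last first.
  by move=> a; apply: Ex_ge0.
apply: ler_sum => a _; apply: ler_wpM2l; [exact: (proj1 (psimp h)) | exact: IH].
Qed.

Fixpoint Acc (phi : seq 'I_K -> 'I_K -> R) (g : seq 'I_K) : R :=
  match g with
  | [::] => 0
  | A :: h => Acc phi h + phi h A
  end.

Lemma Ex_acc_cmp phi psi :
  (forall h, \sum_(a < K) p h a * phi h a <= \sum_(a < K) p h a * psi h a) ->
  forall n h, Ex h n (Acc phi) - Acc phi h <= Ex h n (Acc psi) - Acc psi h.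
Proof.
move=> H; elim=> [|n IH] h /=; first by rewrite !subrr.
have hb : forall a, p h a * Ex (a :: h) n (Acc phi) <=
   p h a * Ex (a :: h) n (Acc psi) + (p h a * phi h a - p h a * psi h a)
   + (Acc phi h - Acc psi h) * p h a.
  move=> a; have := IH (a :: h); rewrite /= => h1.
  have pa := (proj1 (psimp h)) a.
  have := ler_wpM2l pa h1; rewrite mulrBr mulrBr mulrDr mulrDr => h2.
  have e : p h a * Ex (a :: h) n (Acc phi) = p h a * Ex (a :: h) n (Acc phi) by [].
  lra.
have := @ler_sum R 'I_K (index_enum 'I_K) xpredT _ _ (fun a _ => hb a).
rewrite !big_split /= sumrN -mulr_sumr psum mulr1.
have := H h; lra.
Qed.

Lemma Ex_acc_le phi c : (forall h, \sum_(a < K) p h a * phi h a <= c) ->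
  forall n h, Ex h n (Acc phi) <= Acc phi h + n%:R * c.
Proof.
move=> H; elim=> [|n IH] h /=; first by rewrite mul0r addr0.
have hb : forall a, p h a * Ex (a :: h) n (Acc phi) <=
   (Acc phi h + n%:R * c) * p h a + p h a * phi h a.
  move=> a; have := IH (a :: h); rewrite /= => h1.
  have pa := (proj1 (psimp h)) a.
  have := ler_wpM2l pa h1; rewrite !mulrDr => h2; lra.
apply: le_trans (ler_sum _ (fun a _ => hb a)) _.
rewrite big_split /= -mulr_sumr psum mulr1.
have := H h; rewrite -natr1; lra.
Qed.

Lemma exp_Ex n h : exp_reward y p h n =
  Ex h n (Acc (fun h A => y (size h) A)) - Acc (fun h A => y (size h) A) h.
Proof.
elim: n h => [|n IH] h /=; first by rewrite subrr.
under eq_bigr do rewrite IH /=.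
have e : forall a, p h a * (y (size h) a + (Ex (a :: h) n (Acc (fun h A => y (size h) A))
   - (Acc (fun h A => y (size h) A) h + y (size h) a))) =
   p h a * Ex (a :: h) n (Acc (fun h A => y (size h) A))
   - Acc (fun h A => y (size h) A) h * p h a.
  by move=> a; ring.
by rewrite (eq_bigr _ (fun a _ => e a)) sumrB -mulr_sumr psum mulr1.
Qed.

Lemma Ex_size n h (F : nat -> R) : Ex h n (fun g => F (size g)) = F (size h + n)%N.
Proof.
elim: n h => [|n IH] h /=; first by rewrite addn0.
under eq_bigr do rewrite IH /= addSnnS.
by rewrite -mulr_suml psum mul1r.
Qed.


Lemma AccU u g : Acc (fun h _ => y (size h) u) g = \sum_(t < size g) y t u.
Proof. by elim: g => [|A h IH] /=; rewrite ?big_ord0 // big_ord_recr /= IH. Qed.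

Lemma Acc_phi u g : Acc (fun h A => yhat M y p h A u - \sum_(a < K) p h a * yhat M y p h A a) g
  = Lhat M y p g u - Spy g.
Proof. by elim: g => [|A h IH] //=; rewrite ?subrr // IH; ring. Qed.

Lemma Acc_psi u g : Acc (fun h A => y (size h) u - y (size h) A) g
  = Acc (fun h _ => y (size h) u) g - Acc (fun h A => y (size h) A) g.
Proof. by elim: g => [|A h IH] //=; rewrite ?subrr // IH; ring. Qed.

Lemma Acc_b g : Bs g = Acc (fun h A => (M - y (size h) A) ^+ 2 / Num.sqrt (p h A)) g.
Proof. by elim: g => [|A h IH] //=; rewrite IH. Qed.

Lemma cmp_cond u h :
  \sum_(a < K) p h a * (y (size h) u - y (size h) a) <=
  \sum_(a < K) p h a * (yhat M y p h a u - \sum_(b < K) p h b * yhat M y p h a b).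
Proof.
under [X in _ <= X]eq_bigr => a _ do rewrite pyhat.
have e1 : forall a, p h a * (yhat M y p h a u - (M + p h a * ((y (size h) a - M) / p h a)))
  = p h a * yhat M y p h a u - M * p h a - p h a * (p h a * ((y (size h) a - M) / p h a)).
  by move=> a; ring.
rewrite (eq_bigr _ (fun a _ => e1 a)) !sumrB -mulr_sumr psum mulr1.
have e2 : forall a, p h a * (p h a * ((y (size h) a - M) / p h a)) = p h a * (y (size h) a - M).
  move=> a; have [->|pn0] := eqVneq (p h a) 0; first by rewrite !mul0r.
  by rewrite (mulrC (p h a) ((y (size h) a - M) / p h a)) divfK.
rewrite (eq_bigr _ (fun a _ => e2 a)).
have e3 : \sum_(a < K) p h a * yhat M y p h a u = M + p h u * ((y (size h) u - M) / p h u).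
  rewrite /yhat.
  have e4 : forall a, p h a * ((y (size h) u - M) / p h u * (a == u)%:R + M)
    = (u == a)%:R * (p h a * ((y (size h) u - M) / p h u)) + M * p h a.
    by move=> a; rewrite eq_sym; ring.
  by rewrite (eq_bigr _ (fun a _ => e4 a)) big_split /= sum_ind -mulr_sumr psum mulr1 addrC.
rewrite e3.
have e5 : forall a, p h a * (y (size h) u - y (size h) a) = y (size h) u * p h a - p h a * y (size h) a.
  by move=> a; ring.
rewrite (eq_bigr _ (fun a _ => e5 a)) sumrB -mulr_sumr psum mulr1.
have e6 : forall a, p h a * (y (size h) a - M) = p h a * y (size h) a - M * p h a.
  by move=> a; ring.
rewrite (eq_bigr _ (fun a _ => e6 a)) sumrB -mulr_sumr psum mulr1.
have : y (size h) u <= M + p h u * ((y (size h) u - M) / p h u).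
  have [->|pn0] := eqVneq (p h u) 0; first by rewrite mul0r addr0; case/andP: (hy (size h) u).
  by rewrite mulrC divfK // addrC subrK.
lra.
Qed.

Lemma b_cond h : \sum_(a < K) p h a * ((M - y (size h) a) ^+ 2 / Num.sqrt (p h a))
  <= (M - m) ^+ 2 * sK.
Proof.
have hb : forall a, p h a * ((M - y (size h) a) ^+ 2 / Num.sqrt (p h a))
    <= (M - m) ^+ 2 * Num.sqrt (p h a).
  move=> a; have pa := (proj1 (psimp h)) a.
  have hyy : (M - y (size h) a) ^+ 2 <= (M - m) ^+ 2.
    case/andP: (hy (size h) a) => h1 h2; nra.
  have [->|pn0] := eqVneq (p h a) 0; first by rewrite sqrtr0 !mul0r mulr0.
  have pp : 0 < p h a by rewrite lt0r pn0.
  have sp : 0 < Num.sqrt (p h a) by rewrite sqrtr_gt0.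
  have ep : Num.sqrt (p h a) ^+ 2 = p h a by rewrite sqr_sqrtr.
  rewrite -{1}ep.
  have -> : Num.sqrt (p h a) ^+ 2 * ((M - y (size h) a) ^+ 2 / Num.sqrt (p h a))
     = (M - y (size h) a) ^+ 2 * Num.sqrt (p h a).
    by field; apply/eqP => h0; lra.
  by rewrite ler_wpM2r // ltW.
apply: le_trans (ler_sum _ (fun a _ => hb a)) _.
rewrite -mulr_sumr ler_wpM2l ?sqr_ge0 //.
exact: sum_sqrt_le (p h) (psimp h).
Qed.

Lemma final_arith (D T' B : R) : 0 <= D -> 0 <= T' -> 0 <= B -> B <= T' * (D ^+ 2 * sK) ->
  2 * D + 2 * (Num.sqrt (2 * c0) * Num.sqrt B) <= 4 * D * Num.sqrt (K%:R * T') + 2 * D.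
Proof.
move=> D0 T0 B0 hB.
have s1 := sK_gt1.
suff : Num.sqrt (2 * c0) * Num.sqrt B <= 2 * D * Num.sqrt (K%:R * T') by lra.
apply: sq_le.
- by rewrite mulr_ge0 ?sqrtr_ge0.
- by rewrite !mulr_ge0 ?sqrtr_ge0.
have k0 := K_gt0.
rewrite !exprMn !sqr_sqrtr //; last 2 first.
- by rewrite mulr_ge0 // ltW.
- by rewrite mulr_ge0 // ltW // c0_gt0.
have e : 4 * K%:R = 4 * sK ^+ 2 by rewrite sK2.
have : 2 * c0 * B <= 2 * c0 * (T' * (D ^+ 2 * sK)) by rewrite ler_wpM2l // mulr_ge0 // ltW // c0_gt0.
have : 0 <= D ^+ 2 * T' * sK by rewrite !mulr_ge0 ?sqr_ge0 // ltW // (lt_trans ltr01 s1).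
rewrite expr2 in e.
nra.
Qed.

Lemma main T : regret y p T <= 4 * (M - m) * Num.sqrt (K%:R * T%:R) + 2 * (M - m).
Proof.
rewrite /regret lerBlDr.
have u0 : 'I_K := Ordinal (leq_trans (isT : (0 < 2)%N) hK).
apply: ge_sup; first by exists (\sum_(t < T) y t u0); exists u0.
move=> _ [u _ <-].
rewrite -lerBlDr.
have e1 : \sum_(t < T) y t u - exp_reward y p [::] T =
   Ex [::] T (Acc (fun h A => y (size h) u - y (size h) A)).
  rewrite exp_Ex /= subr0.
  have -> : \sum_(t < T) y t u = Ex [::] T (Acc (fun h _ => y (size h) u)).
    rewrite (Ex_ext _ _ _ _ (fun g => AccU u g)) (Ex_size T [::] (fun n => \sum_(t < n) y t u)).
    by [].
  rewrite (Ex_ext _ _ _ _ (fun g => Acc_psi u g)).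
  set A1 := Acc (fun h _ => y (size h) u); set A2 := Acc (fun h A => y (size h) A).
  have ee : Ex [::] T (fun g => A1 g - A2 g) = Ex [::] T (fun g => 1 * A1 g + (-1) * A2 g + 0).
    by apply: Ex_ext => g; ring.
  rewrite ee Ex_lin; ring.
rewrite e1.
have h1 := Ex_acc_cmp _ _ (cmp_cond u) T [::]; rewrite /= !subr0 in h1.
apply: le_trans h1 _.
rewrite (Ex_ext _ _ _ _ (fun g => Acc_phi u g)).
apply: le_trans (Ex_mono T [::] _ _ (fun g => pseudo2 g u)) _.
have c0p := c0_gt0.
have e2 : forall g, 2 * (M - m) + 2 * Num.sqrt (2 * c0 * Bs g) =
   (2 * Num.sqrt (2 * c0)) * Num.sqrt (Bs g) + 0 * Num.sqrt (Bs g) + 2 * (M - m).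
  have hc : 0 <= 2 * c0 by rewrite mulr_ge0 // ltW.
  by move=> g; rewrite [Num.sqrt (2 * c0 * _)]sqrtrM //; ring.
rewrite (Ex_ext _ _ _ _ e2) Ex_lin mul0r addr0.
have h2 := Ex_sqrt T [::] _ Bs_ge0.
have h3 : Ex [::] T Bs <= T%:R * ((M - m) ^+ 2 * sK).
  rewrite (Ex_ext _ _ _ _ Acc_b).
  by have := Ex_acc_le _ _ b_cond T [::]; rewrite /= add0r.
have h4 : 2 * Num.sqrt (2 * c0) * Ex [::] T (fun g => Num.sqrt (Bs g)) <=
   2 * (Num.sqrt (2 * c0) * Num.sqrt (Ex [::] T Bs)).
  by rewrite -mulrA ler_wpM2l // ler_wpM2l ?sqrtr_ge0.
have hD : 0 <= M - m by rewrite subr_ge0.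
have := final_arith _ _ _ hD (ler0n R T) (Ex_ge0 T [::] _ Bs_ge0) h3.
move: h4; lra.
Qed.

End Proof.

Theorem theorem9 (R : realType) (K : nat) (hK : (2 <= K)%N) (M m : R)
  (hmM : m <= M) (y : nat -> 'I_K -> R)
  (hy : forall t a, m <= y t a <= M)
  (p : seq 'I_K -> 'I_K -> R) (hp : adaftrl_policy M y p)
  (T : nat) (hT : (1 <= T)%N) :
  regret y p T <= 4 * (M - m) * Num.sqrt (K%:R * T%:R) + 2 * (M - m).
Proof. exact: main. Qed.
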